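(* Let $M=B\circ S$ with $S$ subsampling without replacement with batch size $q$, and let the batch relation be the substitution relation $\simeq_\Delta$ with induced distance $d_\Delta$. Then for every $\alpha>1$ and all datasets $x\simeq_\Delta x'$ of size $N$, $$\Lambda_\alpha(m_x\|m_{x'})\le\max_{y^{(1)}_1,y^{(1)}_2,y^{(2)}_1,y^{(2)}_2\in\mathbb Y}\Lambda_\alpha\big((1-w)b_{y^{(1)}_1}+w\,b_{y^{(1)}_2}\ \big\|\ (1-w)b_{y^{(2)}_1}+w\,b_{y^{(2)}_2}\big)$$ subject to $y^{(1)}_1=y^{(2)}_1$, $d_\Delta(y^{(1)}_1,y^{(1)}_2)\le1$, $d_\Delta(y^{(1)}_1,y^{(2)}_2)\le1$, $d_\Delta(y^{(1)}_2,y^{(2)}_2)\le1$, where $w=q/N$.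
   Context: Finite set $\mathbb A$, datasets are subsets of $\mathbb A$ with more than $q$ elements; batches are subsets of size $q$. Subsampling without replacement with batch size $q$: $s_x(y)=\binom{|x|}{q}^{-1}$ for $y\subseteq x$, $|y|=q$. $B$ assigns a density $b_y$ on $\mathbb R^D$ to each batch; $m_x=\sum_y b_y s_x(y)$. Substitution relation: $u\simeq_\Delta u'$ iff $u'=(u\setminus\{a\})\cup\{a'\}$ for some $a\in u$, $a'\notin u$ (used both for datasets and batches); $d_\Delta$ is the induced distance (length of shortest chain of neighbors, $0$ from a set to itself). $\Lambda_\alpha(p\|q)=\int p^\alpha q^{1-\alpha}dz$. *)

(* Defs.v *)
From HB Require Import structures.
From mathcomp Require Import all_boot all_order all_algebra.
From mathcomp Require Import all_classical all_reals all_analysis.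
Set Implicit Arguments. Unset Strict Implicit. Unset Printing Implicit Defensive.
Import Order.TTheory GRing.Theory Num.Theory.
Local Open Scope ring_scope.

Definition subst_rel (A : finType) (u u' : {set A}) : Prop :=
  exists a a', [/\ a \in u, a' \notin u & u' = (u :\ a) :|: [set a']].

(* dist_le k u v  <->  d_Delta(u, v) <= k, where d_Delta is the length of a
   shortest chain of substitution neighbours (0 from a set to itself). *)
Fixpoint dist_le (A : finType) (k : nat) (u v : {set A}) : Prop :=
  match k with
  | 0 => u = v
  | k'.+1 => dist_le k' u v \/ exists w, dist_le k' u w /\ subst_rel w v
  end.

Definition mixture (R : realType) (A : finType) (T : Type) (q : nat)
  (b : {set A} -> T -> R) (x : {set A}) : T -> R :=
  fun z => \sum_(y : {set A} | (y \subset x) && (#|y| == q))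
             b y z / ('C(#|x|, q))%:R.

Definition renyi_integrand (R : realType) (alpha : R) (p q : R) : \bar R :=
  if p == 0 then 0%E
  else if q == 0 then +oo%E
  else ((powR p alpha) * (powR q (1 - alpha)))%:E.

Definition Lambda (R : realType) (d : measure_display) (T : measurableType d)
  (mu : {measure set T -> \bar R}) (alpha : R) (p q : T -> R) : \bar R :=
  (\int[mu]_z renyi_integrand alpha (p z) (q z))%E.

Definition is_density (R : realType) (d : measure_display) (T : measurableType d)
  (mu : {measure set T -> \bar R}) (f : T -> R) : Prop :=
  [/\ measurable_fun setT f, (forall z, 0 <= f z) &
      (\int[mu]_z (f z)%:E = 1)%E].

(* Main.v *)
Require Import Defs.
From HB Require Import structures.
From mathcomp Require Import all_boot all_order all_algebra.
From mathcomp Require Import all_classical all_reals all_analysis.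
From mathcomp Require Import ring lra zify measurable_realfun.
Import Order.TTheory GRing.Theory Num.Theory.
Local Open Scope ring_scope.


Section realineq.
Variable R : realType.

Lemma g_sub (al : R) (ha : 1 < al) (p1 p2 q1 q2 : R) : 0 <= p1 -> 0 <= p2 -> 0 < q1 -> 0 < q2 ->
  (p1+p2) `^ al * (q1+q2) `^ (1-al) <= p1 `^ al * q1 `^ (1-al) + p2 `^ al * q2 `^ (1-al).
Proof.
move=> hp1 hp2 hq1 hq2.
have al0 : 0 < al by apply: lt_trans ha.
have al10 : 0 < al - 1 by rewrite subr_gt0.
set e := (1 - al) / al.
set s := q1 + q2.
have s0 : 0 < s by rewrite addr_gt0.
set X := p1 `^ al * q1 `^ (1-al) + p2 `^ al * q2 `^ (1-al).
have X0 : 0 <= X by rewrite addr_ge0 // mulr_ge0 // powR_ge0.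
have key : forall p q : R, 0 <= p -> 0 < q ->
  [/\ (p * q `^ e) * q `^ (- e) = p,
      (p * q `^ e) `^ al = p `^ al * q `^ (1 - al) &
      (q `^ (- e)) `^ (al / (al - 1)) = q].
  move=> p q hp hq; split.
  - by rewrite -mulrA powRN mulfV ?mulr1 // gt_eqF // powR_gt0.
  - rewrite powRM // ?powR_ge0 // -powRrM; congr (_ * q `^ _).
    by rewrite /e; field; rewrite gt_eqF.
  - rewrite -powRrM.
    have -> : - e * (al / (al - 1)) = 1.
      by rewrite /e; field; rewrite ?gt_eqF.
    by rewrite powRr1 // ltW.
have [k11 k12 k13] := key p1 q1 hp1 hq1.
have [k21 k22 k23] := key p2 q2 hp2 hq2.
have H := @hoelder2 R (p1 * q1 `^ e) (p2 * q2 `^ e) (q1 `^ (- e)) (q2 `^ (- e)) al (al / (al - 1)).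
rewrite k11 k21 k12 k22 k13 k23 in H.
have H' : p1 + p2 <= X `^ al^-1 * s `^ ((al - 1) / al).
  rewrite -[(al - 1)/al]invf_div; apply: H; rewrite ?mulr_ge0 ?powR_ge0 //.
  - by rewrite divr_gt0.
  - by rewrite invf_div; field; rewrite gt_eqF.
have H2 : (p1 + p2) `^ al <= X * s `^ (al - 1).
  have := ge0_ler_powR (ltW al0) _ _ H'.
  rewrite powRM ?powR_ge0 // -!powRrM.
  have -> : al^-1 * al = 1 by field; rewrite gt_eqF.
  have -> : (al - 1) / al * al = al - 1 by field; rewrite gt_eqF.
  rewrite powRr1 //.
  by apply; rewrite nnegrE ?addr_ge0 // mulr_ge0 // powR_ge0.
rewrite -/X.
have -> : 1 - al = - (al - 1) by rewrite opprB.
rewrite powRN ler_pdivrMr ?powR_gt0 //.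
Qed.
End realineq.




Section ri.
Variable R : realType.
Variable al : R.
Hypothesis ha : 1 < al.

Let ri := @renyi_integrand R al.

Lemma ri_ge0 p q : (0 <= ri p q)%E.
Proof.
rewrite /ri /renyi_integrand; case: ifP => // _; case: ifP => // _.
by rewrite lee_fin mulr_ge0 // powR_ge0.
Qed.

Lemma riE p q : 0 <= p -> 0 < q -> ri p q = (p `^ al * q `^ (1 - al))%:E.
Proof.
move=> hp hq; rewrite /ri /renyi_integrand (gt_eqF hq).
case: ifPn => [/eqP -> | //]; rewrite powR0 ?mul0r //.
by rewrite gt_eqF // (lt_trans _ ha).
Qed.

Lemma ri_hom c p q : 0 < c -> 0 <= p -> 0 <= q ->
  ri (c * p) (c * q) = (c%:E * ri p q)%E.
Proof.
move=> hc hp hq; rewrite /ri /renyi_integrand !mulf_eq0 (gt_eqF hc) /=.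
case: ifP => _; first by rewrite mule0.
case: ifP => _; first by rewrite gt0_muley.
rewrite -EFinM; congr (_%:E).
rewrite (powRM al (ltW hc) hp) (powRM _ (ltW hc) hq) mulrACA.
rewrite -powRD; last by rewrite (gt_eqF hc) implybT.
by rewrite addrC subrK powRr1 ?ltW.
Qed.

Lemma ri_sub p1 p2 q1 q2 : 0 <= p1 -> 0 <= p2 -> 0 <= q1 -> 0 <= q2 ->
  (ri (p1 + p2) (q1 + q2) <= ri p1 q1 + ri p2 q2)%E.
Proof.
move=> hp1 hp2 hq1 hq2.
have [q10|q1p] := eqVneq q1 0.
  subst q1; rewrite add0r.
  have [p10|p1p] := eqVneq p1 0; first by rewrite p10 add0r {2}/ri /renyi_integrand eqxx add0e.
  rewrite {2}/ri /renyi_integrand (negbTE p1p) eqxx addye ?leey //.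
  by move: (ri_ge0 p2 q2); case: (ri p2 q2).
have [q20|q2p] := eqVneq q2 0.
  subst q2; rewrite addr0.
  have [p20|p2p] := eqVneq p2 0; first by rewrite p20 addr0 {3}/ri /renyi_integrand eqxx adde0.
  rewrite {3}/ri /renyi_integrand (negbTE p2p) eqxx addey ?leey //.
  by move: (ri_ge0 p1 q1); case: (ri p1 q1).
have q1g : 0 < q1 by rewrite lt_neqAle eq_sym q1p.
have q2g : 0 < q2 by rewrite lt_neqAle eq_sym q2p.
rewrite !riE ?addr_ge0 ?addr_gt0 // -EFinD lee_fin.
exact: g_sub.
Qed.

Lemma ri_sum (I : Type) (r : seq I) (P : pred I) (F G : I -> R) :
  (forall i, P i -> 0 <= F i) -> (forall i, P i -> 0 <= G i) ->
  (ri (\sum_(i <- r | P i) F i) (\sum_(i <- r | P i) G i) <=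
   \sum_(i <- r | P i) ri (F i) (G i))%E.
Proof.
move=> hF hG; elim: r => [|i r IH].
  by rewrite !big_nil /ri /renyi_integrand eqxx.
rewrite !big_cons; case: ifP => // Pi.
apply: le_trans (ri_sub _ _ _ _ (hF i Pi) (sumr_ge0 _ hF) (hG i Pi) (sumr_ge0 _ hG)) _.
exact: leeD2l.
Qed.
End ri.


Lemma ri_meas (R : realType) (al : R) (d : measure_display) (T : measurableType d)
  (P Q : T -> R) : measurable_fun setT P -> measurable_fun setT Q ->
  measurable_fun setT (fun z => renyi_integrand al (P z) (Q z)).
Proof.
move=> mP mQ; rewrite /renyi_integrand.
apply: measurable_fun_ifT; first exact: measurable_fun_eqr.
  exact: measurable_cst.
apply: measurable_fun_ifT; first exact: measurable_fun_eqr.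
  exact: measurable_cst.
apply/measurable_EFinP; apply: measurable_funM.
  by apply: (measurableT_comp (measurable_powR _)) => //.
by apply: (measurableT_comp (measurable_powR _)) => //.
Qed.


Lemma lambda_mix_le (R : realType) (d : measure_display) (T : measurableType d)
  (mu : {measure set T -> \bar R}) (al : R) (ha : 1 < al)
  (K : eqType) (s : seq K) (c : R) (P Q : K -> T -> R) (M : \bar R) :
  0 < c ->
  (forall k, measurable_fun setT (P k)) ->
  (forall k, measurable_fun setT (Q k)) ->
  (forall k z, 0 <= P k z) -> (forall k z, 0 <= Q k z) ->
  (forall k, k \in s -> (Lambda mu al (P k) (Q k) <= M)%E) ->
  \sum_(k <- s) c = 1 ->
  (Lambda mu al (fun z => (\sum_(k <- s) c * P k z)%R) (fun z => (\sum_(k <- s) c * Q k z)%R) <= M)%E.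
Proof.
move=> c0 mP mQ P0 Q0 hM hc.
rewrite /Lambda.
have mri : forall k, measurable_fun setT (fun z => renyi_integrand al (P k z) (Q k z)).
  by move=> k; apply: ri_meas.
apply: (@le_trans _ _ (\int[mu]_z \sum_(k <- s) (c%:E * renyi_integrand al (P k z) (Q k z)))%E).
  apply: ge0_le_integral => //.
  - by move=> z _; apply: ri_ge0.
  - apply: ri_meas.
    + by apply: measurable_sum => k; apply: measurable_funM => //; apply: measurable_cst.
    + by apply: measurable_sum => k; apply: measurable_funM => //; apply: measurable_cst.
  - by apply: emeasurable_sum => k; apply: measurable_funeM.
  - move=> z _.
    have := @ri_sum R al ha K s xpredT (fun k => c * P k z) (fun k => c * Q k z).
    move=> /(_ (fun k _ => mulr_ge0 (ltW c0) (P0 k z)) (fun k _ => mulr_ge0 (ltW c0) (Q0 k z))).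
    move=> /le_trans; apply.
    by apply: lee_sum => k _; rewrite ri_hom.
rewrite ge0_integral_sum //; last first.
  by move=> k z _; apply: mule_ge0; [rewrite lee_fin ltW|exact: ri_ge0].
  by move=> k; apply: measurable_funeM.
apply: (@le_trans _ _ (\sum_(k <- s) (c%:E * M)))%E.
  rewrite big_seq_cond [X in (_ <= X)%E]big_seq_cond.
  apply: lee_sum => k /andP [ks _].
  rewrite ge0_integralZl //; last by rewrite lee_fin ltW.
  - by apply: lee_wpmul2l; [rewrite lee_fin ltW|exact: hM].
  - by move=> z _; apply: ri_ge0.
rewrite -ge0_sume_distrl; last by move=> k _; rewrite lee_fin ltW.
by rewrite sumEFin hc mul1e.
Qed.

Lemma lambda_mix_le2 (R : realType) (d : measure_display) (T : measurableType d)
  (mu : {measure set T -> \bar R}) (al : R) (ha : 1 < al)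
  (K : eqType) (s : seq K) (c : R) (P Q : K -> T -> R) (M : \bar R) :
  0 < c ->
  (forall k, k \in s -> measurable_fun setT (P k)) ->
  (forall k, k \in s -> measurable_fun setT (Q k)) ->
  (forall k z, k \in s -> 0 <= P k z) -> (forall k z, k \in s -> 0 <= Q k z) ->
  (forall k, k \in s -> (Lambda mu al (P k) (Q k) <= M)%E) ->
  \sum_(k <- s) c = 1 ->
  (Lambda mu al (fun z => (\sum_(k <- s) c * P k z)%R) (fun z => (\sum_(k <- s) c * Q k z)%R) <= M)%E.
Proof.
move=> c0 mP mQ P0 Q0 hM hc.
pose P' k := if k \in s then P k else fun _ : T => 0 : R.
pose Q' k := if k \in s then Q k else fun _ : T => 0 : R.
have eP : (fun z => (\sum_(k <- s) c * P k z)%R) = (fun z => (\sum_(k <- s) c * P' k z)%R).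
  apply: funext => z; rewrite big_seq [RHS]big_seq; apply: eq_bigr => k ks.
  by rewrite /P' ks.
have eQ : (fun z => (\sum_(k <- s) c * Q k z)%R) = (fun z => (\sum_(k <- s) c * Q' k z)%R).
  apply: funext => z; rewrite big_seq [RHS]big_seq; apply: eq_bigr => k ks.
  by rewrite /Q' ks.
rewrite eP eQ; apply: lambda_mix_le => //.
- by move=> k; rewrite /P'; case: ifP => ks; [exact: mP|exact: measurable_cst].
- by move=> k; rewrite /Q'; case: ifP => ks; [exact: mQ|exact: measurable_cst].
- by move=> k z; rewrite /P'; case: ifP => ks; [exact: P0|].
- by move=> k z; rewrite /Q'; case: ifP => ks; [exact: Q0|].
- by move=> k ks; rewrite /P' /Q' ks; exact: hM.
Qed.

Set Implicit Arguments. Unset Strict Implicit.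

Section comb.
Variable A : finType.

Definition PK (S : {set A}) (q : nat) (p : {set A} * A) : bool :=
  [&& p.1 \subset S, #|p.1| == q & p.2 \in p.1].
Definition hsub (a : A) (p : {set A} * A) : {set A} := p.1 :\ p.2 :|: [set a].

Lemma sum_PK1 (R : realType) (S : {set A}) q (F : {set A} -> R) :
  \sum_(p | PK S q p) F p.1 = q%:R * \sum_(y : {set A} | (y \subset S) && (#|y| == q)) F y.
Proof.
rewrite big_distrr /=.
rewrite (eq_bigl (fun p : ({set A} * A)%type => ((p.1 \subset S) && (#|p.1| == q)) && (p.2 \in p.1))); last first.
  by move=> p; rewrite /PK andbA.
rewrite -(pair_big_dep (fun y : {set A} => (y \subset S) && (#|y| == q)) (fun y e => e \in y) (fun y e => F y)) /=.
apply: eq_bigr => y /andP [_ /eqP cy].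
by rewrite sumr_const cy mulr_natl.
Qed.

Lemma sum_PK2 (R : realType) (x : {set A}) (a : A) q (F : {set A} -> R) :
  a \in x ->
  \sum_(p | PK (x :\ a) q p) F (hsub a p) =
  (#|x| - q)%:R * \sum_(y : {set A} | [&& y \subset x, #|y| == q & a \in y]) F y.
Proof.
move=> ax.
pose PK2 (p : {set A} * A) := [&& p.1 \subset x, #|p.1| == q, a \in p.1 & p.2 \in x :\: p.1].
pose h (j : {set A} * A) := (hsub a j, j.2).
pose h' (i : {set A} * A) := (i.1 :\ a :|: [set i.2], i.2).
have step1 : \sum_(p | PK2 p) F p.1 = \sum_(p | PK (x :\ a) q p) F (hsub a p).
  rewrite (reindex_onto h h'); last first.
    case=> y e /and4P [yx /eqP cy ay]; rewrite /= !inE => /andP [ey ex].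
    rewrite /h /h' /hsub /=; congr (_, _).
    apply/finset.setP => u; rewrite !inE.
    have [->|ua] := eqVneq u a; first by rewrite ay orbT.
    have [->|ue] := eqVneq u e; first by rewrite (negbTE ey).
    by rewrite /= !orbF.
  apply: eq_bigl => -[y e]; rewrite /PK2 /h /h' /hsub /=.
  apply/idP/idP.
  - move=> H; have [y2 Hy2] : exists y2, y2 = y :\ e :|: [set a] by eexists.
    rewrite -Hy2 in H.
    move: H => /andP [/and4P [y2x /eqP cy2 ay2]]; rewrite !inE => /andP [eny ex] /eqP [ey].
    have ea : e != a by apply: contraNneq eny => ->.
    subst y; clear Hy2.
    rewrite /PK /=; apply/and3P; split.
    + apply/fintype.subsetP => u; rewrite !inE; case/orP => [/andP [ua uy2]|/eqP ->].
      * by rewrite ua (fintype.subsetP y2x).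
      * by rewrite ea ex.
    + rewrite finset.setUC cardsU1 !inE (negbTE eny) andbF /=.
      move: (cardsD1 a y2); rewrite ay2 cy2 => ->; apply/eqP; lia.
    + by rewrite !inE eqxx orbT.
  - move=> /and3P [ySa /eqP cy ey]; move: ySa; rewrite subsetD1 => /andP [yx ya].
    have ea : e != a by apply: contraNneq ya => <-.
    apply/andP; split; first (apply/and4P; split).
    + apply/fintype.subsetP => u; rewrite !inE; case/orP => [/andP [_ uy]|/eqP ->].
      * exact: (fintype.subsetP yx).
      * exact: ax.
    + rewrite finset.setUC cardsU1 !inE.
      have -> : (a != e) && (a \in y) = false by rewrite (negbTE ya) andbF.
      move: (cardsD1 e y); rewrite ey cy /= => ->; apply/eqP; lia.
    + by rewrite !inE eqxx orbT.
    + by rewrite !inE eqxx (negbTE ea) (fintype.subsetP yx).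
    + apply/eqP; congr (_, _); apply/finset.setP => u; rewrite !inE.
      have [->|ue] := eqVneq u e; first by rewrite ey orbT.
      have [->|ua] := eqVneq u a; first by rewrite (negbTE ya).
      by rewrite /= !orbF.
rewrite -step1 big_distrr /=.
rewrite (eq_bigl (fun p : ({set A} * A)%type => [&& p.1 \subset x, #|p.1| == q & a \in p.1] && (p.2 \in x :\: p.1))); last first.
  by move=> p; rewrite /PK2 !andbA.
rewrite -(pair_big_dep (fun y : {set A} => [&& y \subset x, #|y| == q & a \in y]) (fun y e => e \in x :\: y) (fun y e => F y)) /=.
apply: eq_bigr => y /and3P [yx /eqP cy _].
by rewrite sumr_const cardsD (finset.setIidPr yx) cy mulr_natl.
Qed.
End comb.

Unset Implicit Arguments. Set Strict Implicit.


Definition cc (R : realType) (q N : nat) : R := ((q%:R : R) * ('C(N.-1, q))%:R)^-1.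
Definition ww (R : realType) (q N : nat) : R := q%:R / N%:R.

Lemma decomp (R : realType) (A : finType) (x : {set A}) (a : A) (q N : nat) (g : {set A} -> R) :
  a \in x -> #|x| = N -> (0 < q)%N -> (q < N)%N ->
  \sum_(y : {set A} | (y \subset x) && (#|y| == q)) g y / ('C(#|x|, q))%:R =
  \sum_(p | PK (x :\ a) q p) cc R q N * ((1 - ww R q N) * g p.1 + ww R q N * g (hsub a p)).
Proof.
move=> ax cx q0 qN.
rewrite -mulr_suml (bigID (fun y : {set A} => a \in y)) /=.
rewrite (eq_bigl (fun y : {set A} => [&& y \subset x, #|y| == q & a \in y])); last first.
  by move=> y; rewrite andbA.
rewrite [X in _ + X](eq_bigl (fun y : {set A} => (y \subset x :\ a) && (#|y| == q))); last first.
  by move=> y; rewrite subsetD1; case: (y \subset x); case: (#|y| == q); case: (a \in y).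
rewrite [RHS](eq_bigr (fun p => cc R q N * (1 - ww R q N) * g p.1 + cc R q N * ww R q N * g (hsub a p))); last by move=> p _; rewrite mulrDr !mulrA.
rewrite big_split /= -!big_distrr /= sum_PK1 sum_PK2 // cx.
have HC : ('C(N.-1, q))%:R = ((N%:R - q%:R) * ('C(N, q))%:R / N%:R :> R).
  have := mul_bin_down N q; move/(congr1 (fun n : nat => n%:R : R)).
  rewrite !natrM natrB ?(ltnW qN) // => <-.
  by rewrite mulrAC mulfV ?mul1r // pnatr_eq0 -lt0n (ltn_trans q0 qN).
rewrite /cc /ww HC natrB ?(ltnW qN) //.
have hq : q%:R != 0 :> R by rewrite pnatr_eq0 -lt0n.
have hN : N%:R != 0 :> R by rewrite pnatr_eq0 -lt0n (ltn_trans q0 qN).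
have hC : ('C(N, q))%:R != 0 :> R by rewrite pnatr_eq0 -lt0n bin_gt0 ltnW.
have hNq : N%:R - q%:R != 0 :> R by rewrite -natrB ?(ltnW qN) // pnatr_eq0 subn_eq0 -ltnNge.
field.
by rewrite hq hN hC hNq.
Qed.


Lemma card_hsub (A : finType) (S : {set A}) (q : nat) (a : A) (p : {set A} * A) :
  PK S q p -> a \notin S -> #|hsub a p| = q.
Proof.
case: p => y e /and3P [yS /eqP cy ey] aS; rewrite /hsub /= finset.setUC cardsU1 !inE.
have -> : (a != e) && (a \in y) = false.
  by apply/negbTE; rewrite negb_and; apply/orP; right; apply: contra aS; apply: (fintype.subsetP yS).
move: (cardsD1 e y); rewrite ey cy /=; lia.
Qed.

Theorem mainTheorem11 (R : realType) (d : measure_display) (T : measurableType d)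
  (mu : {measure set T -> \bar R}) (A : finType) (q : nat)
  (b : {set A} -> T -> R)
  (hb : forall y : {set A}, #|y| = q -> is_density mu (b y))
  (alpha : R) (halpha : 1 < alpha)
  (N : nat) (x x' : {set A})
  (hxN : #|x| = N) (hqN : (q < N)%N) (hx'N : #|x'| = N)
  (hxx' : subst_rel x x') :
  let w : R := q%:R / N%:R in
  (Lambda mu alpha (mixture q b x) (mixture q b x') <=
   \big[Order.max/-oo%E]_(y11 : {set A} | #|y11| == q)
   \big[Order.max/-oo%E]_(y12 : {set A} | #|y12| == q)
   \big[Order.max/-oo%E]_(y21 : {set A} | #|y21| == q)
   \big[Order.max/-oo%E]_(y22 : {set A} |
        [&& #|y22| == q, y11 == y21,
            `[< dist_le 1 y11 y12 >], `[< dist_le 1 y11 y22 >]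
          & `[< dist_le 1 y12 y22 >]])
     Lambda mu alpha
       (fun z => ((1 - w) * b y11 z + w * b y12 z)%R)
       (fun z => ((1 - w) * b y21 z + w * b y22 z)%R))%E.
Proof.
cbv zeta; set w : R := q%:R / N%:R.
set M := (\big[Order.max/-oo%E]_(y11 : {set A} | #|y11| == q) _)%E.
have HM : forall y1 y2 y2' : {set A}, #|y1| = q -> #|y2| = q -> #|y2'| = q ->
   dist_le 1 y1 y2 -> dist_le 1 y1 y2' -> dist_le 1 y2 y2' ->
   (Lambda mu alpha (fun z => ((1 - w) * b y1 z + w * b y2 z)%R)
       (fun z => ((1 - w) * b y1 z + w * b y2' z)%R) <= M)%E.
  move=> y1 y2 y2' c1 c2 c2' d12 d12' d22'.
  apply: (bigmax_sup y1); first by rewrite c1.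
  apply: (bigmax_sup y2); first by rewrite c2.
  apply: (bigmax_sup y1); first by rewrite c1.
  apply: (bigmax_sup y2') => //.
  by rewrite c2' !eqxx /=; apply/and3P; split; apply/asboolP.
have [q0|q0] := posnP q.
  subst q.
  have em : forall y : {set A}, mixture 0 b y = b finset.set0.
    move=> y; apply: funext => z; rewrite /mixture (big_pred1 finset.set0).
      by rewrite bin0 divr1.
    move=> y'; rewrite cards_eq0; have [->|hne] := eqVneq y' finset.set0.
      by rewrite finset.sub0set /= eqxx.
    by rewrite andbF /= (negbTE hne).

  rewrite !em.
  have w0 : w = 0 by rewrite /w mul0r.
  have E : (fun z => (1 - w) * b finset.set0 z + w * b finset.set0 z) = b finset.set0.
    by apply: funext => z; rewrite w0 subr0 mul1r mul0r addr0.
  have := HM finset.set0 finset.set0 finset.set0 (cards0 _) (cards0 _) (cards0 _).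
  rewrite E; apply; by left.
case: hxx' => a [a' [ax a'x ex']].
set S := x :\ a.
have aS : a \notin S by rewrite !inE eqxx.
have a'S : a' \notin S by rewrite !inE negb_and a'x orbT.
have a'x' : a' \in x' by rewrite ex' !inE eqxx orbT.
have aa' : a' != a by apply: contraNneq a'x => ->.
have hS : x' :\ a' = S by rewrite ex' finset.setUC setU1K.
pose s := [seq p <- index_enum ({set A} * A)%type | PK S q p].
pose P k z := (1 - w) * b (k : {set A} * A).1 z + w * b (hsub a k) z.
pose Q k z := (1 - w) * b (k : {set A} * A).1 z + w * b (hsub a' k) z.
have ex1 : mixture q b x = fun z => (\sum_(k <- s) cc R q N * P k z)%R.
  apply: funext => z; rewrite /mixture (@decomp _ _ _ _ _ _ (fun y => b y z) ax hxN q0 hqN) /s big_filter.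
  by [].
have ex2 : mixture q b x' = fun z => (\sum_(k <- s) cc R q N * Q k z)%R.
  apply: funext => z; rewrite /mixture (@decomp _ _ _ _ _ _ (fun y => b y z) a'x' hx'N q0 hqN) hS /s big_filter.
  by [].
have N0 : (0 < N)%N by apply: leq_ltn_trans hqN.
have wge0 : 0 <= w by rewrite /w divr_ge0.
have wle1 : w <= 1 by rewrite /w ler_pdivrMr ?ltr0n // mul1r ler_nat ltnW.
have w1 : 0 <= 1 - w by rewrite subr_ge0.
have ks : forall k, k \in s -> [/\ #|k.1| = q, #|hsub a k| = q, #|hsub a' k| = q & PK S q k].
  move=> k; rewrite mem_filter => /andP [hk _]; split => //.
  - by case/and3P: hk => _ /eqP.
  - exact: card_hsub hk aS.
  - exact: card_hsub hk a'S.
rewrite ex1 ex2; apply: lambda_mix_le2 => //.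
- by rewrite invr_gt0 mulr_gt0 // ltr0n // bin_gt0 -ltnS prednK.
- move=> k /ks [c1 c2 _ _].
  have [m1 _ _] := hb _ c1; have [m2 _ _] := hb _ c2.
  by apply: measurable_funD; apply: measurable_funM => //; apply: measurable_cst.
- move=> k /ks [c1 _ c2 _].
  have [m1 _ _] := hb _ c1; have [m2 _ _] := hb _ c2.
  by apply: measurable_funD; apply: measurable_funM => //; apply: measurable_cst.
- move=> k z /ks [c1 c2 _ _].
  have [_ p1 _] := hb _ c1; have [_ p2 _] := hb _ c2.
  by rewrite /P addr_ge0 // mulr_ge0.
- move=> k z /ks [c1 _ c2 _].
  have [_ p1 _] := hb _ c1; have [_ p2 _] := hb _ c2.
  by rewrite /Q addr_ge0 // mulr_ge0.
- move=> [y e] /ks [c1 c2 c2' hk]; move: (hk) => /and3P [yS _ ey].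
  have ay : a \notin y by apply: contra aS; apply: (fintype.subsetP yS).
  have a'y : a' \notin y by apply: contra a'S; apply: (fintype.subsetP yS).
  apply: HM => //.
  + by right; exists y; split => //; exists e, a.
  + by right; exists y; split => //; exists e, a'.
  + right; exists (hsub a (y, e)); split => //; exists a, a'; split.
    * by rewrite /hsub !inE eqxx orbT.
    * by rewrite /hsub !inE (negbTE aa') (negbTE a'y) andbF.
    * rewrite /hsub /=; apply/finset.setP => u; rewrite !inE.
      have [->|ua] := eqVneq u a; first by rewrite (negbTE ay) andbF.
      by rewrite /= orbF.
- rewrite /s big_filter.
  transitivity (\sum_(p | PK S q p) cc R q N * ((1 - ww R q N) * (fun _ : {set A} => (1:R)) p.1 + ww R q N * (fun _ : {set A} => (1:R)) (hsub a p))).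
    by apply: eq_bigr => p _; rewrite /= !mulr1 subrK mulr1.
  rewrite -(@decomp _ _ _ _ _ _ (fun _ : {set A} => (1:R)) ax hxN q0 hqN) -mulr_suml.
  rewrite (eq_bigl (fun y : {set A} => y \in [set y : {set A} | y \subset x & #|y| == q])); last first.
    by move=> y; rewrite inE.
  by rewrite sumr_const cards_draws divff // pnatr_eq0 -lt0n bin_gt0 hxN ltnW.
Qed.
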